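(* Let $d,m\ge 1$ and, for each $u\in\mathbb{R}$ and $\mu\in\{1,\ldots,m\}$, let $M_\mu^u\in\mathbb{C}^{d\times d}$ be matrices with $\sum_{\mu=1}^m (M_\mu^u)^\dagger M_\mu^u=\mathrm{I}$ for every $u$, such that each $u\mapsto M_\mu^u$ is of class $C^2$, and such that for $u=0$ all $M_\mu^0$ are diagonal in a common orthonormal basis $\{|n\rangle : n=1,\ldots,d\}$ of $\mathbb{C}^d$: $M_\mu^0=\sum_{n=1}^d c_{\mu,n}|n\rangle\langle n|$ with $c_{\mu,n}\in\mathbb{C}$. Define the $d\times d$ real matrix $R$ by $$R_{n_1,n_2}=\sum_{\mu=1}^m\Big(2\Big|\langle n_1|\tfrac{d (M_\mu^u)^\dagger}{du}\big|_{u=0}|n_2\rangle\Big|^2+2\delta_{n_1,n_2}\,\mathrm{Re}\Big(c_{\mu,n_1}\langle n_1|\tfrac{d^2 (M_\mu^u)^\dagger}{du^2}\big|_{u=0}|n_2\rangle\Big)\Big).$$ If $R\neq 0$, then $P=\mathrm{I}-R/\mathrm{tr}(R)$ is well defined, has non-negative entries, and is a right stochastic matrix (each row sums to $1$).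
   Context: $\mathrm{I}$ denotes the identity matrix, $\dagger$ the conjugate transpose, $\delta$ the Kronecker delta. *)

(* Defs.v *)
From mathcomp Require Import all_boot all_order all_algebra.
From mathcomp Require Import all_classical all_reals all_analysis.
From mathcomp.real_closed Require Import complex.

Set Implicit Arguments.
Unset Strict Implicit.
Unset Printing Implicit Defensive.

Import Order.TTheory GRing.Theory Num.Theory.
Import numFieldNormedType.Exports.
Local Open Scope ring_scope.

Definition cdag (R : rcfType) (p q : nat) (A : 'M[R[i]]_(p, q)) : 'M[R[i]]_(q, p) :=
  (map_mx (@conjc R) A)^T.

Definition cderiv (R : realType) (f : R -> R[i]) (u : R) : R[i] :=
  Complex (derive1 (fun v => complex.Re (f v)) u) (derive1 (fun v => complex.Im (f v)) u).

Definition mxderiv (R : realType) (p q : nat) (F : R -> 'M[R[i]]_(p, q)) (u : R)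
  : 'M[R[i]]_(p, q) := \matrix_(i, j) cderiv (fun v => F v i j) u.

Definition C2_real (R : realType) (g : R -> R) : Prop :=
  (forall x, derivable g x 1) /\ (forall x, derivable (derive1 g) x 1) /\
  (forall x : R, continuous_at x (derive1 (derive1 g))).

Definition C2_complex (R : realType) (f : R -> R[i]) : Prop :=
  C2_real (fun v => complex.Re (f v)) /\ C2_real (fun v => complex.Im (f v)).

Definition C2_mx (R : realType) (p q : nat) (F : R -> 'M[R[i]]_(p, q)) : Prop :=
  forall i j, C2_complex (fun v => F v i j).

Definition cabs2 (R : rcfType) (z : R[i]) : R := complex.Re z ^+ 2 + complex.Im z ^+ 2.

(* <n1| A |n2> where |n> is the n-th column of U *)
Definition braket (R : rcfType) (d : nat) (U A : 'M[R[i]]_d) (n1 n2 : 'I_d) : R[i] :=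
  (cdag (col n1 U) *m A *m col n2 U) 0 0.

Definition Rmat (R : realType) (d m : nat) (M : 'I_m -> R -> 'M[R[i]]_d)
  (U : 'M[R[i]]_d) (c : 'I_m -> 'I_d -> R[i]) : 'M[R]_d :=
  \matrix_(n1, n2) \sum_(mu < m)
     (2 * cabs2 (braket U (mxderiv (fun u => cdag (M mu u)) 0) n1 n2)
      + 2 * (n1 == n2)%:R *
        complex.Re (c mu n1 * braket U (mxderiv (mxderiv (fun u => cdag (M mu u))) 0) n1 n2)).

(* Main.v *)
Require Import Defs.
From mathcomp Require Import all_boot all_order all_algebra.
From mathcomp Require Import all_classical all_reals all_analysis.
From mathcomp.real_closed Require Import complex.
From mathcomp Require Import ring lra.
Import Order.TTheory GRing.Theory Num.Theory.
Import numFieldNormedType.Exports.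
Local Open Scope ring_scope.
Section S.
Variable R : realType.
Implicit Types F G : R -> R.
Lemma dD F G x : derivable F x 1 -> derivable G x 1 ->
  derive1 (fun v => F v + G v) x = derive1 F x + derive1 G x.
Proof. move=> dF dG; rewrite !derive1E. exact: (deriveD dF dG). Qed.
Lemma dB F G x : derivable F x 1 -> derivable G x 1 ->
  derive1 (fun v => F v - G v) x = derive1 F x - derive1 G x.
Proof. move=> dF dG; rewrite !derive1E. exact: (deriveB dF dG). Qed.
Lemma dM F G x : derivable F x 1 -> derivable G x 1 ->
  derive1 (fun v => F v * G v) x = F x * derive1 G x + G x * derive1 F x.
Proof. move=> dF dG; rewrite !derive1E. exact: (deriveM dF dG). Qed.
Lemma dN F x : derivable F x 1 -> derive1 (fun v => - F v) x = - derive1 F x.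
Proof. move=> dF; rewrite !derive1E. exact: (deriveN dF). Qed.
Lemma vD F G x : derivable F x 1 -> derivable G x 1 -> derivable (fun v => F v + G v) x 1.
Proof. move=> dF dG. exact: (derivableD dF dG). Qed.
Lemma vB F G x : derivable F x 1 -> derivable G x 1 -> derivable (fun v => F v - G v) x 1.
Proof. move=> dF dG. exact: (derivableB dF dG). Qed.
Lemma vM F G x : derivable F x 1 -> derivable G x 1 -> derivable (fun v => F v * G v) x 1.
Proof. move=> dF dG. exact: (derivableM dF dG). Qed.
Lemma vN F x : derivable F x 1 -> derivable (fun v => - F v) x 1.
Proof. move=> dF. exact: (derivableN dF). Qed.

Lemma d_sum (I : Type) (r : seq I) (F : I -> R -> R) x :
  (forall i, derivable (F i) x 1) ->
  derive1 (fun v => \sum_(i <- r) F i v) x = \sum_(i <- r) derive1 (F i) x.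
Proof.
move=> dF; elim: r => [|a r IH].
  have -> : (fun v => \sum_(i <- [::]) F i v) = fun _ => 0 by apply/funext => v; rewrite big_nil.
  by rewrite big_nil; exact: derive1_cst.
have -> : (fun v => \sum_(i <- a :: r) F i v) = fun v => F a v + \sum_(i <- r) F i v
  by apply/funext => v; rewrite big_cons.
rewrite big_cons dD ?IH //.
elim: r {IH} => [|b r IH].
  have -> : (fun v => \sum_(i <- [::]) F i v) = fun _ => 0 by apply/funext => v; rewrite big_nil.
  exact: derivable_cst.
have -> : (fun v => \sum_(i <- b :: r) F i v) = fun v => F b v + \sum_(i <- r) F i v
  by apply/funext => v; rewrite big_cons.
exact: vD.
Qed.

Lemma v_sum (I : Type) (r : seq I) (F : I -> R -> R) x :
  (forall i, derivable (F i) x 1) ->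
  derivable (fun v => \sum_(i <- r) F i v) x 1.
Proof.
move=> dF; elim: r => [|b r IH].
  have -> : (fun v => \sum_(i <- [::]) F i v) = fun _ => 0 by apply/funext => v; rewrite big_nil.
  exact: derivable_cst.
have -> : (fun v => \sum_(i <- b :: r) F i v) = fun v => F b v + \sum_(i <- r) F i v
  by apply/funext => v; rewrite big_cons.
exact: vD.
Qed.

Definition cdv (f : R -> R[i]) x := derivable (fun v => complex.Re (f v)) x 1 /\ derivable (fun v => complex.Im (f v)) x 1.

Lemma cdvM (f g : R -> R[i]) x : cdv f x -> cdv g x -> cdv (fun v => f v * g v) x.
Proof.
move=> [f1 f2] [g1 g2]; rewrite /cdv.
have -> : (fun v => complex.Re (f v * g v)) = (fun v => complex.Re (f v) * complex.Re (g v) - complex.Im (f v) * complex.Im (g v)).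
  by apply/funext => v; case: (f v) => a b; case: (g v) => c e.
have -> : (fun v => complex.Im (f v * g v)) = (fun v => complex.Re (f v) * complex.Im (g v) + complex.Im (f v) * complex.Re (g v)).
  by apply/funext => v; case: (f v) => a b; case: (g v) => c e.
by split; [apply: vB|apply: vD]; apply: vM.
Qed.

Lemma cderivM (f g : R -> R[i]) x : cdv f x -> cdv g x ->
  cderiv (fun v => f v * g v) x = cderiv f x * g x + f x * cderiv g x.
Proof.
move=> [f1 f2] [g1 g2].
rewrite /cderiv.
have -> : (fun v => complex.Re (f v * g v)) = (fun v => complex.Re (f v) * complex.Re (g v) - complex.Im (f v) * complex.Im (g v)).
  by apply/funext => v; case: (f v) => a b; case: (g v) => c e.
have -> : (fun v => complex.Im (f v * g v)) = (fun v => complex.Re (f v) * complex.Im (g v) + complex.Im (f v) * complex.Re (g v)).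
  by apply/funext => v; case: (f v) => a b; case: (g v) => c e.
rewrite (@dB (fun v => complex.Re (f v) * complex.Re (g v)) (fun v => complex.Im (f v) * complex.Im (g v))); try exact: vM.
rewrite (@dD (fun v => complex.Re (f v) * complex.Im (g v)) (fun v => complex.Im (f v) * complex.Re (g v))); try exact: vM.
rewrite (dM _ _ _ f1 g1).
rewrite (dM _ _ _ f2 g2).
rewrite (dM _ _ _ f1 g2).
rewrite (dM _ _ _ f2 g1) /=.
move: (derive1 _ x) (derive1 _ x) (derive1 _ x) (derive1 _ x) => p q r s.
move: (f x) (g x) => [a b] [c e].
simpc.
congr Complex.
(rewrite /=; ring).
(rewrite /=; ring).
Qed.

Lemma cdvD (f g : R -> R[i]) x : cdv f x -> cdv g x -> cdv (fun v => f v + g v) x.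
Proof.
move=> [f1 f2] [g1 g2]; rewrite /cdv.
have -> : (fun v => complex.Re (f v + g v)) = (fun v => complex.Re (f v) + complex.Re (g v)).
  by apply/funext => v; case: (f v) => a b; case: (g v) => c e.
have -> : (fun v => complex.Im (f v + g v)) = (fun v => complex.Im (f v) + complex.Im (g v)).
  by apply/funext => v; case: (f v) => a b; case: (g v) => c e.
split; [exact: (vD _ _ _ f1 g1)|exact: (vD _ _ _ f2 g2)].
Qed.

Lemma cderivD (f g : R -> R[i]) x : cdv f x -> cdv g x ->
  cderiv (fun v => f v + g v) x = cderiv f x + cderiv g x.
Proof.
move=> [f1 f2] [g1 g2]; rewrite /cderiv.
have -> : (fun v => complex.Re (f v + g v)) = (fun v => complex.Re (f v) + complex.Re (g v)).
  by apply/funext => v; case: (f v) => a b; case: (g v) => c e.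
have -> : (fun v => complex.Im (f v + g v)) = (fun v => complex.Im (f v) + complex.Im (g v)).
  by apply/funext => v; case: (f v) => a b; case: (g v) => c e.
by rewrite (dD _ _ _ f1 g1) (dD _ _ _ f2 g2).
Qed.

Lemma cdvJ (f : R -> R[i]) x : cdv f x -> cdv (fun v => (f v)^*%C) x.
Proof.
move=> [f1 f2]; rewrite /cdv.
have -> : (fun v => complex.Re ((f v)^*%C)) = (fun v => complex.Re (f v)).
  by apply/funext => v; case: (f v) => a b.
have -> : (fun v => complex.Im ((f v)^*%C)) = (fun v => - complex.Im (f v)).
  by apply/funext => v; case: (f v) => a b.
split; [exact: f1|exact: (vN _ _ f2)].
Qed.

Lemma cderivJ (f : R -> R[i]) x : cdv f x ->
  cderiv (fun v => (f v)^*%C) x = (cderiv f x)^*%C.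
Proof.
move=> [f1 f2]; rewrite /cderiv.
have -> : (fun v => complex.Re ((f v)^*%C)) = (fun v => complex.Re (f v)).
  by apply/funext => v; case: (f v) => a b.
have -> : (fun v => complex.Im ((f v)^*%C)) = (fun v => - complex.Im (f v)).
  by apply/funext => v; case: (f v) => a b.
by rewrite (dN _ _ f2).
Qed.

Lemma cderiv_cst (k : R[i]) x : cderiv (fun _ => k) x = 0.
Proof. by rewrite /cderiv !derive1_cst. Qed.

Lemma cderiv_cstF (k : R[i]) : cderiv (fun _ : R => k) = fun _ => 0.
Proof. by apply/funext => x; rewrite cderiv_cst. Qed.

Lemma cdv_sum (I : Type) (r : seq I) (F : I -> R -> R[i]) x :
  (forall i, cdv (F i) x) -> cdv (fun v => \sum_(i <- r) F i v) x.
Proof.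
move=> dF; elim: r => [|b r IH].
  have -> : (fun v => \sum_(i <- [::]) F i v) = fun _ => 0 by apply/funext => v; rewrite big_nil.
  by split; apply: derivable_cst.
have -> : (fun v => \sum_(i <- b :: r) F i v) = fun v => F b v + \sum_(i <- r) F i v
  by apply/funext => v; rewrite big_cons.
exact: cdvD.
Qed.

Lemma cderiv_sum (I : Type) (r : seq I) (F : I -> R -> R[i]) x :
  (forall i, cdv (F i) x) ->
  cderiv (fun v => \sum_(i <- r) F i v) x = \sum_(i <- r) cderiv (F i) x.
Proof.
move=> dF; elim: r => [|b r IH].
  have -> : (fun v => \sum_(i <- [::]) F i v) = fun _ => 0 by apply/funext => v; rewrite big_nil.
  by rewrite big_nil cderiv_cst.
have -> : (fun v => \sum_(i <- b :: r) F i v) = fun v => F b v + \sum_(i <- r) F i v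
  by apply/funext => v; rewrite big_cons.
by rewrite big_cons cderivD ?IH //; apply: cdv_sum.
Qed.

Definition T2 (h : R -> R[i]) := forall x, cdv h x /\ cdv (cderiv h) x.

Lemma T2M f g : T2 f -> T2 g -> T2 (fun v => f v * g v) /\
  forall x, cderiv (cderiv (fun v => f v * g v)) x =
    cderiv (cderiv f) x * g x + 2 * (cderiv f x * cderiv g x) + f x * cderiv (cderiv g) x.
Proof.
move=> Tf Tg.
have E : cderiv (fun v => f v * g v) = fun v => cderiv f v * g v + f v * cderiv g v.
  by apply/funext => v; rewrite (@cderivM f g v (Tf v).1 (Tg v).1).
have c1 x : cdv (fun v => cderiv f v * g v) x by exact: (@cdvM (cderiv f) g x (Tf x).2 (Tg x).1).
have c2 x : cdv (fun v => f v * cderiv g v) x by exact: (@cdvM f (cderiv g) x (Tf x).1 (Tg x).2).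
split.
  move=> x; rewrite E; split; first exact: (@cdvM f g x (Tf x).1 (Tg x).1).
  exact: (@cdvD _ _ x (c1 x) (c2 x)).
move=> x; rewrite E (@cderivD _ _ x (c1 x) (c2 x)).
rewrite (@cderivM (cderiv f) g x (Tf x).2 (Tg x).1) (@cderivM f (cderiv g) x (Tf x).1 (Tg x).2).
by rewrite mulr_natl mulr2n !addrA.
Qed.

Lemma T2J f : T2 f -> T2 (fun v => (f v)^*%C) /\
  forall x, cderiv (cderiv (fun v => (f v)^*%C)) x = (cderiv (cderiv f) x)^*%C.
Proof.
move=> Tf.
have E : cderiv (fun v => (f v)^*%C) = fun v => (cderiv f v)^*%C.
  by apply/funext => v; rewrite (@cderivJ f v (Tf v).1).
split.
  move=> x; rewrite E; split; [exact: (@cdvJ f x (Tf x).1)|exact: (@cdvJ (cderiv f) x (Tf x).2)].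
by move=> x; rewrite E (@cderivJ (cderiv f) x (Tf x).2).
Qed.

Lemma T2sum (I : Type) (r : seq I) (F : I -> R -> R[i]) :
  (forall i, T2 (F i)) -> T2 (fun v => \sum_(i <- r) F i v) /\
  forall x, cderiv (cderiv (fun v => \sum_(i <- r) F i v)) x = \sum_(i <- r) cderiv (cderiv (F i)) x.
Proof.
move=> TF.
have E : cderiv (fun v => \sum_(i <- r) F i v) = fun v => \sum_(i <- r) cderiv (F i) v.
  by apply/funext => v; rewrite (@cderiv_sum I r F v (fun i => (TF i v).1)).
split.
  move=> x; rewrite E; split; [exact: (@cdv_sum I r F x (fun i => (TF i x).1))|exact: (@cdv_sum I r (fun i => cderiv (F i)) x (fun i => (TF i x).2))].
by move=> x; rewrite E (@cderiv_sum I r (fun i => cderiv (F i)) x (fun i => (TF i x).2)).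
Qed.

Lemma T2C2 (h : R -> R[i]) : C2_complex h -> T2 h.
Proof.
move=> [[a1 [a2 _]] [b1 [b2 _]]] x; split; split.
- exact: a1.
- exact: b1.
- exact: a2.
- exact: b2.
Qed.

Lemma cdagK (p q : nat) (X : 'M[R[i]]_(p, q)) : cdag (cdag X) = X.
Proof. by apply/matrixP => a b; rewrite !mxE conjcK. Qed.

Lemma cdagE (p q : nat) (X : 'M[R[i]]_(p, q)) a b : cdag X a b = (X b a)^*%C.
Proof. by rewrite !mxE. Qed.

Lemma mxderiv2E (p q : nat) (F : R -> 'M[R[i]]_(p, q)) x a b :
  mxderiv (mxderiv F) x a b = cderiv (cderiv (fun v => F v a b)) x.
Proof. by rewrite mxE; congr cderiv; apply/funext => v; rewrite mxE. Qed.

Lemma key2 (m d : nat) (A : 'I_m -> R -> 'M[R[i]]_d) :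
  (forall mu j k, T2 (fun v => A mu v j k)) ->
  (forall v, \sum_(mu < m) A mu v *m cdag (A mu v) = 1%:M) ->
  \sum_(mu < m) (mxderiv (mxderiv (A mu)) 0 *m cdag (A mu 0)
     + 2%:R *: (mxderiv (A mu) 0 *m cdag (mxderiv (A mu) 0))
     + A mu 0 *m cdag (mxderiv (mxderiv (A mu)) 0)) = 0.
Proof.
move=> TA HA; apply/matrixP => j l.
pose F mu k v := A mu v j k * (A mu v l k)^*%C.
have TF mu k : T2 (F mu k) /\ forall x, cderiv (cderiv (F mu k)) x =
   cderiv (cderiv (fun v => A mu v j k)) x * (A mu x l k)^*%C
   + 2 * (cderiv (fun v => A mu v j k) x * (cderiv (fun v => A mu v l k) x)^*%C)
   + A mu x j k * (cderiv (cderiv (fun v => A mu v l k)) x)^*%C.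
  have [TJ EJ] := @T2J _ (TA mu l k).
  have [TP EP] := @T2M _ _ (TA mu j k) TJ.
  split; first exact: TP.
  move=> x; rewrite /F EP EJ.
  by rewrite (@cderivJ (fun v => A mu v l k) x (TA mu l k x).1).
have TS mu : T2 (fun v => \sum_(k < d) F mu k v) /\ forall x,
   cderiv (cderiv (fun v => \sum_(k < d) F mu k v)) x = \sum_(k < d) cderiv (cderiv (F mu k)) x.
  exact: (@T2sum _ (index_enum 'I_d) _ (fun k => (TF mu k).1)).
have [_ E] := @T2sum _ (index_enum 'I_m) _ (fun mu => (TS mu).1).
have G : (fun v => \sum_(mu < m) \sum_(k < d) F mu k v) = fun _ => (1%:M : 'M[R[i]]_d) j l.
  apply/funext => v; rewrite -(HA v) summxE; apply: eq_bigr => mu _.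
  by rewrite mxE; apply: eq_bigr => k _; rewrite /F !mxE.
move: (E 0); rewrite G cderiv_cstF cderiv_cst => /esym E0.
rewrite summxE [RHS]mxE -[RHS]E0; apply: eq_bigr => mu _.
rewrite (TS mu).2 !mxE mulr_sumr -!big_split; apply: eq_bigr => k _ /=.
by rewrite (TF mu k).2 !cdagE !mxderiv2E !mxE.
Qed.

Lemma cdag_mul (p q r : nat) (X : 'M[R[i]]_(p, q)) (Y : 'M[R[i]]_(q, r)) :
  cdag (X *m Y) = cdag Y *m cdag X.
Proof. by rewrite /cdag map_mxM trmx_mul. Qed.

Lemma cdagD (p q : nat) (X Y : 'M[R[i]]_(p, q)) : cdag (X + Y) = cdag X + cdag Y.
Proof. by apply/matrixP => a b; rewrite !mxE rmorphD. Qed.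

Section Bra.
Variables (d : nat) (U : 'M[R[i]]_d).
Hypothesis HU : cdag U *m U = 1%:M.

Lemma orthoU a b : cdag (col a U) *m col b U = (a == b)%:R%:M.
Proof.
apply/matrixP => i0 j0; rewrite (ord1 i0) (ord1 j0).
have := congr1 (fun X : 'M[R[i]]_d => X a b) HU; rewrite !mxE => <-.
by apply: eq_bigr => k _; rewrite !mxE.
Qed.

Lemma complU : \sum_(n < d) col n U *m cdag (col n U) = 1%:M.
Proof.
have H := mulmx1C HU.
apply/matrixP => a b; rewrite summxE -H mxE; apply: eq_bigr => k _; rewrite !mxE big_ord1 !mxE.
done.
Qed.

Lemma braketD X Y a b : braket U (X + Y) a b = braket U X a b + braket U Y a b.
Proof. by rewrite /braket mulmxDr mulmxDl mxE. Qed.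

Lemma braketZ k X a b : braket U (k *: X) a b = k * braket U X a b.
Proof. by rewrite /braket -scalemxAr -scalemxAl mxE. Qed.

Lemma braket_sum (I : Type) (r : seq I) (X : I -> 'M[R[i]]_d) a b :
  braket U (\sum_(i <- r) X i) a b = \sum_(i <- r) braket U (X i) a b.
Proof. by rewrite /braket mulmx_sumr mulmx_suml summxE. Qed.

Lemma braket0 a b : braket U 0 a b = 0.
Proof. by rewrite /braket mulmx0 mul0mx mxE. Qed.

Lemma braketJ X a b : braket U (cdag X) a b = (braket U X b a)^*%C.
Proof.
rewrite /braket.
have -> : cdag (col a U) *m cdag X *m col b U = cdag (cdag (col b U) *m X *m col a U).
  by rewrite !cdag_mul cdagK mulmxA.
by rewrite cdagE.
Qed.

Lemma braket_diag X (c : 'I_d -> R[i]) a :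
  braket U (X *m \sum_(n < d) c n *: (col n U *m cdag (col n U))) a a = c a * braket U X a a.
Proof.
rewrite /braket -!mulmxA mulmx_suml.
have -> : \sum_(n < d) c n *: (col n U *m cdag (col n U)) *m col a U = c a *: col a U.
  rewrite (bigD1 a) //= big1 ?addr0.
    by rewrite -scalemxAl -mulmxA orthoU eqxx mulmx1.
  by move=> n /negbTE Hn; rewrite -scalemxAl -mulmxA orthoU Hn mul_mx_scalar scale0r scaler0.
by rewrite -!scalemxAr mxE mulmxA.
Qed.

Lemma braket_sq X a :
  braket U (X *m cdag X) a a = \sum_(n < d) braket U X a n * (braket U X a n)^*%C.
Proof.
have -> : X *m cdag X = X *m (\sum_(n < d) col n U *m cdag (col n U)) *m cdag X.
  by rewrite complU mulmx1.
rewrite mulmx_sumr mulmx_suml braket_sum; apply: eq_bigr => n _.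
rewrite -braketJ /braket.
have -> : cdag (col a U) *m (X *m (col n U *m cdag (col n U)) *m cdag X) *m col a U
   = (cdag (col a U) *m X *m col n U) *m (cdag (col n U) *m cdag X *m col a U)
  by rewrite !mulmxA.
by rewrite mxE big_ord1.
Qed.
End Bra.

Lemma ReD' (x y : R[i]) : complex.Re (x + y) = complex.Re x + complex.Re y.
Proof. by case: x => a b; case: y. Qed.
Lemma Re0' : complex.Re (0 : R[i]) = 0. Proof. by []. Qed.
Lemma Re_sum (I : Type) (r : seq I) (F : I -> R[i]) :
  complex.Re (\sum_(i <- r) F i) = \sum_(i <- r) complex.Re (F i).
Proof. by elim: r => [|a r IH]; rewrite ?big_nil ?big_cons // ReD' IH. Qed.
Lemma ReJ' (z : R[i]) : complex.Re (z^*%C) = complex.Re z.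
Proof. by case: z. Qed.
Lemma Re2 (z : R[i]) : complex.Re (2 * z) = 2 * complex.Re z.
Proof. by rewrite mulr_natl mulr2n ReD' [RHS]mulr_natl mulr2n. Qed.
Lemma ReJJ (z : R[i]) : complex.Re (z * z^*%C) = cabs2 z.
Proof. by case: z => a b; rewrite /cabs2 /= mulrN opprK !expr2. Qed.
End S.

Theorem lemma1 (R : realType) (d m : nat) (M : 'I_m -> R -> 'M[R[i]]_d)
  (U : 'M[R[i]]_d) (c : 'I_m -> 'I_d -> R[i]) :
  (0 < d)%N -> (0 < m)%N ->
  (forall u : R, \sum_(mu < m) cdag (M mu u) *m M mu u = 1%:M) ->
  (forall mu, C2_mx (M mu)) ->
  cdag U *m U = 1%:M ->
  (forall mu, M mu 0 = \sum_(n < d) c mu n *: (col n U *m cdag (col n U))) ->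
  let Rm := Rmat M U c in
  Rm != 0 ->
  let P := 1%:M - (\tr Rm)^-1 *: Rm in
  \tr Rm != 0 /\
  (forall i j, 0 <= P i j) /\
  (forall i, \sum_(j < d) P i j = 1).
Proof.
move=> dpos mpos Hn HC2 HU HM0 Rm HRm P.
have TA : forall mu j k, T2 R (fun v => cdag (M mu v) j k).
  move=> mu j k.
  have -> : (fun v => cdag (M mu v) j k) = (fun v => (M mu v k j)^*%C) by apply/funext => v; rewrite cdagE.
  exact: (@T2J R _ (@T2C2 R _ (HC2 mu k j))).1.
have HA : forall v, \sum_(mu < m) cdag (M mu v) *m cdag (cdag (M mu v)) = 1%:M.
  by move=> v; rewrite -(Hn v); apply: eq_bigr => mu _; rewrite cdagK.
have K := @key2 R m d (fun mu v => cdag (M mu v)) TA HA.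
cbv beta in K.
have RS : forall n1, \sum_(n2 < d) Rm n1 n2 = 0.
  move=> n1.
  have := congr1 (fun X : 'M[R[i]]_d => complex.Re (braket U X n1 n1)) K.
  rewrite /= braket0 braket_sum Re_sum Re0' => H; rewrite -[RHS]H.
  rewrite /Rm /Rmat.
  under eq_bigr do rewrite mxE.
  rewrite exchange_big; apply: eq_bigr => mu _ /=.
  rewrite !braketD braketZ cdagK -cdag_mul braketJ.
  rewrite HM0 (@braket_diag R d U HU) (@braket_sq R d U HU).
  rewrite !ReD' Re2 ReJ' Re_sum.
  under [X in _ = _ + 2 * X + _]eq_bigr => n _ do rewrite ReJJ.
  rewrite big_split /= -mulr_sumr.
  rewrite [X in _ + X = _](bigD1 n1) //= ?eqxx ?mulr1.
  rewrite [X in _ + (_ + X) = _]big1 ?addr0; last by move=> i ne; rewrite eq_sym (negbTE ne) mulr0 mul0r.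
  lra.
have OD : forall i j, i != j -> 0 <= Rm i j.
  move=> i j ne; rewrite /Rm /Rmat mxE; apply: sumr_ge0 => mu _.
  rewrite (negbTE ne) mulr0 mul0r addr0; apply: mulr_ge0 => //.
  by rewrite /cabs2; apply: addr_ge0; apply: sqr_ge0.
clearbody Rm.
have DG : forall i, Rm i i = - \sum_(j | j != i) Rm i j.
  by move=> i; have := RS i; rewrite (bigD1 i) //= => /eqP; rewrite addr_eq0 => /eqP.
have OD' : forall i j, j != i -> 0 <= Rm i j by move=> i j ne; apply: OD; rewrite eq_sym.
have DN : forall i, Rm i i <= 0.
  by move=> i; rewrite DG oppr_le0; apply: sumr_ge0 => j; apply: OD'.
have TRE : \tr Rm = \sum_i Rm i i by [].
have TRle : \tr Rm <= 0 by rewrite TRE; apply: sumr_le0 => i _; apply: DN.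
have TR0 : \tr Rm != 0.
  apply/negP => /eqP T0; move/negP: HRm; apply; apply/eqP/matrixP => i j; rewrite [RHS]mxE.
  have Dz : forall k, Rm k k = 0.
    move=> k; apply/eqP; rewrite -oppr_eq0; apply/eqP.
    apply: (@psumr_eq0P _ _ xpredT (fun k => - Rm k k)) => //.
      by move=> l _; rewrite oppr_ge0.
    by rewrite sumrN -TRE T0 oppr0.
  case: (eqVneq i j) => [->|ne]; first by rewrite Dz.
  have := Dz i; rewrite DG => /eqP; rewrite oppr_eq0 => /eqP H.
  apply: (@psumr_eq0P _ _ (fun k => k != i) (fun k => Rm i k)) => //.
    by move=> l; apply: OD'.
  by rewrite eq_sym.
have TRlt : \tr Rm < 0 by rewrite lt_neqAle TR0 TRle.
split; first exact: TR0.
split.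
  move=> i j; rewrite /P !mxE.
  case: (eqVneq i j) => [<-|ne] /=.
    have htr : \tr Rm <= Rm i i.
      rewrite TRE (bigD1 i) //= gerDl; apply: sumr_le0 => k _; apply: DN.
    have -> : 1 - (\tr Rm)^-1 * Rm i i = (\tr Rm)^-1 * (\tr Rm - Rm i i).
      by rewrite mulrBr mulVf.
    by apply: mulr_le0; [rewrite invr_le0|rewrite subr_le0].
  rewrite sub0r oppr_ge0; apply: mulr_le0_ge0; first by rewrite invr_le0.
  exact: OD.
move=> i; rewrite /P.
under eq_bigr do rewrite !mxE.
rewrite sumrB -mulr_sumr RS mulr0 subr0.
rewrite (bigD1 i) //= eqxx big1 ?addr0 //.
by move=> j ne; rewrite eq_sym (negbTE ne).
Qed.
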